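(* Let $A\in\mathbb{C}^{m\times n}$ have rank $r$, $B\in\mathbb{C}^{m\times n}$ have rank $s$, and $E=B-A$. Then $$\|B^{\dagger}-A^{\dagger}\|_{F}^{2}\geq\max\big\{\gamma'_{1}+\|B^{\dagger}EA^{\dagger}\|_{F}^{2},\ \gamma'_{2}+\|A^{\dagger}EB^{\dagger}\|_{F}^{2}\big\},$$ where $$\gamma'_{1}:=\frac{\|A^{\dagger}E\|_{F}^{2}-\|B\|_{2}^{2}\|A^{\dagger}EB^{\dagger}\|_{F}^{2}}{\|A\|_{2}^{2}}+\frac{\|EB^{\dagger}\|_{F}^{2}-\|A\|_{2}^{2}\|A^{\dagger}EB^{\dagger}\|_{F}^{2}}{\|B\|_{2}^{2}},$$ $$\gamma'_{2}:=\frac{\|EA^{\dagger}\|_{F}^{2}-\|B\|_{2}^{2}\|B^{\dagger}EA^{\dagger}\|_{F}^{2}}{\|A\|_{2}^{2}}+\frac{\|B^{\dagger}E\|_{F}^{2}-\|A\|_{2}^{2}\|B^{\dagger}EA^{\dagger}\|_{F}^{2}}{\|B\|_{2}^{2}}.$$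
   Context: $M^{\dagger}$ denotes the Moore–Penrose inverse of $M$, $\|\cdot\|_{2}$ the spectral norm and $\|\cdot\|_{F}$ the Frobenius norm. *)

(* Defs.v *)
From HB Require Import structures.
From mathcomp Require Import all_boot all_order all_algebra.
From mathcomp Require Import classical_sets reals.
From mathcomp Require Import complex.
Set Implicit Arguments. Unset Strict Implicit. Unset Printing Implicit Defensive.
Import Order.TTheory GRing.Theory Num.Theory.
Local Open Scope ring_scope.

Definition ctrmx (R : rcfType) m n (A : 'M[R[i]]_(m, n)) : 'M[R[i]]_(n, m) :=
  \matrix_(i, j) (A j i)^*.

(* Moore-Penrose inverse: X is the (unique) matrix satisfying the four
   Penrose equations. *)
Definition is_pinv (R : rcfType) m n (A : 'M[R[i]]_(m, n)) (X : 'M[R[i]]_(n, m)) : Prop :=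
  [/\ A *m X *m A = A, X *m A *m X = X,
      ctrmx (A *m X) = A *m X & ctrmx (X *m A) = X *m A].

Definition frob (R : rcfType) m n (A : 'M[R[i]]_(m, n)) : R :=
  Num.sqrt (\sum_(i < m) \sum_(j < n) (ComplexField.Normc.normc (A i j)) ^+ 2).

Definition spec (R : realType) m n (A : 'M[R[i]]_(m, n)) : R :=
  reals.sup [set frob (A *m x) | x in [set x : 'cV[R[i]]_n | frob x <= 1]]%classic.

(* Main.v *)
Require Import Defs.
From HB Require Import structures.
From mathcomp Require Import all_boot all_order all_algebra.
From mathcomp Require Import classical_sets reals.
From mathcomp Require Import complex.
Import Order.TTheory GRing.Theory Num.Theory.
Local Open Scope ring_scope.
Set Implicit Arguments. Unset Strict Implicit. Unset Printing Implicit Defensive.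


Lemma conj_def (R : rcfType) (x : R[i]) : Num.conj x = conjc x.
Proof. by []. Qed.
Lemma norm_def (R : rcfType) (x : R[i]) : `|x| = (ComplexField.Normc.normc x)%:C%C.
Proof. by []. Qed.

Lemma ctrmxK (R : rcfType) m n (A : 'M[R[i]]_(m, n)) : ctrmx (ctrmx A) = A.
Proof. by apply/matrixP => i j; rewrite !mxE conjCK. Qed.

Lemma ctrmxD (R : rcfType) m n (A B : 'M[R[i]]_(m, n)) : ctrmx (A + B) = ctrmx A + ctrmx B.
Proof. by apply/matrixP => i j; rewrite !mxE rmorphD. Qed.

Lemma ctrmxN (R : rcfType) m n (A : 'M[R[i]]_(m, n)) : ctrmx (- A) = - ctrmx A.
Proof. by apply/matrixP => i j; rewrite !mxE rmorphN. Qed.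

Lemma ctrmxB (R : rcfType) m n (A B : 'M[R[i]]_(m, n)) : ctrmx (A - B) = ctrmx A - ctrmx B.
Proof. by rewrite ctrmxD ctrmxN. Qed.

Lemma ctrmxM (R : rcfType) m n p (A : 'M[R[i]]_(m, n)) (B : 'M[R[i]]_(n, p)) :
  ctrmx (A *m B) = ctrmx B *m ctrmx A.
Proof.
apply/matrixP => i j; rewrite !mxE rmorph_sum; apply: eq_bigr => k _.
by rewrite !mxE rmorphM mulrC.
Qed.

Lemma ctrmx1 (R : rcfType) n : ctrmx (1%:M : 'M[R[i]]_n) = 1%:M.
Proof. by apply/matrixP => i j; rewrite !mxE rmorphMn rmorph1 eq_sym. Qed.

Lemma ctrmxZ (R : rcfType) m n (c : R[i]) (A : 'M[R[i]]_(m, n)) :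
  ctrmx (c *: A) = Num.conj c *: ctrmx A.
Proof. by apply/matrixP => i j; rewrite !mxE rmorphM. Qed.

Lemma tr_ctrmx (R : rcfType) n (A : 'M[R[i]]_n) : \tr (ctrmx A) = Num.conj (\tr A).
Proof. by rewrite /mxtrace rmorph_sum; apply: eq_bigr => i _; rewrite mxE. Qed.

Definition F (R : rcfType) m n (A : 'M[R[i]]_(m, n)) : R := frob A ^+ 2.

Lemma FE (R : rcfType) m n (A : 'M[R[i]]_(m, n)) :
  (F A)%:C%C = \sum_i \sum_j `|A i j| ^+ 2.
Proof.
rewrite /F /frob sqr_sqrtr; last by do 2!(apply: sumr_ge0 => ? _); apply: sqr_ge0.
rewrite rmorph_sum; apply: eq_bigr => i _; rewrite rmorph_sum; apply: eq_bigr => j _.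
by rewrite rmorphXn.
Qed.

Lemma FtrE (R : rcfType) m n (A : 'M[R[i]]_(m, n)) :
  (F A)%:C%C = \tr (A *m ctrmx A).
Proof.
rewrite FE /mxtrace; apply: eq_bigr => i _; rewrite !mxE; apply: eq_bigr => j _.
by rewrite mxE normCK.
Qed.

Lemma F_ge0 (R : rcfType) m n (A : 'M[R[i]]_(m, n)) : 0 <= F A.
Proof. exact: sqr_ge0. Qed.

Lemma F_adj (R : rcfType) m n (A : 'M[R[i]]_(m, n)) : F (ctrmx A) = F A.
Proof. by apply: complexI; rewrite !FtrE ctrmxK mxtrace_mulC. Qed.

Lemma FN (R : rcfType) m n (A : 'M[R[i]]_(m, n)) : F (- A) = F A.
Proof. by apply: complexI; rewrite !FtrE ctrmxN mulNmx mulmxN opprK. Qed.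

Lemma pyth (R : rcfType) m n (A B : 'M[R[i]]_(m, n)) :
  A *m ctrmx B = 0 -> F (A + B) = F A + F B.
Proof.
move=> AB; suff h : (F (A + B))%:C%C = (F A)%:C%C + (F B)%:C%C.
  by apply: complexI; rewrite h rmorphD.
rewrite !FtrE ctrmxD mulmxDl !mulmxDr AB.
have -> : B *m ctrmx A = ctrmx (A *m ctrmx B) by rewrite ctrmxM ctrmxK.
rewrite AB !mxtraceD.
have -> : ctrmx (0 : 'M[R[i]]_m) = 0 by apply/matrixP => i j; rewrite !mxE rmorph0.
by rewrite mxtrace0 !add0r addr0.
Qed.

Lemma pyth' (R : rcfType) m n (A B : 'M[R[i]]_(m, n)) :
  ctrmx A *m B = 0 -> F (A + B) = F A + F B.
Proof.
move=> AB; rewrite -F_adj ctrmxD pyth ?F_adj // ctrmxK //.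
Qed.

Lemma FZ (R : rcfType) m n (c : R[i]) (A : 'M[R[i]]_(m, n)) :
  (F (c *: A))%:C%C = `|c| ^+ 2 * (F A)%:C%C.
Proof.
by rewrite !FtrE ctrmxZ -scalemxAl -scalemxAr !mxtraceZ mulrA normCK.
Qed.

Lemma FZr (R : rcfType) m n (t : R) (A : 'M[R[i]]_(m, n)) :
  F ((t%:C)%C *: A) = t ^+ 2 * F A.
Proof.
apply: complexI; rewrite FZ; rewrite [in RHS]rmorphM /= rmorphXn /=.
congr (_ * _); rewrite normCK conj_def conjc_real expr2; apply/eqP; by rewrite eq_complex /= !mulr0 !mul0r subr0 addr0 !eqxx.
Qed.

Lemma F_col (R : rcfType) m n (A : 'M[R[i]]_(m, n)) : F A = \sum_j F (col j A).
Proof.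
apply: complexI; rewrite rmorph_sum FE exchange_big /=; apply: eq_bigr => j _.
rewrite FE; apply: eq_bigr => i _; by rewrite big_ord1 mxE.
Qed.

Lemma F_row (R : rcfType) m n (A : 'M[R[i]]_(m, n)) : F A = \sum_i F (row i A).
Proof.
apply: complexI; rewrite FE rmorph_sum; apply: eq_bigr => i _.
by rewrite -[RHS]/((F (row i A))%:C%C) FE big_ord1; apply: eq_bigr => j _; rewrite mxE.
Qed.

Lemma F_eq0 (R : rcfType) m n (A : 'M[R[i]]_(m, n)) : F A = 0 -> A = 0.
Proof.
move=> h; have : (F A)%:C%C = 0 by rewrite h.
rewrite FE => /eqP; rewrite psumr_eq0 => [/allP H|]; last first.
  by move=> i _; apply: sumr_ge0 => j _; by rewrite exprn_ge0 ?normr_ge0.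
apply/matrixP => i j; rewrite mxE.
have /H /implyP /(_ isT) := mem_index_enum i.
rewrite psumr_eq0 => [/allP H2|]; last by move=> k _; by rewrite exprn_ge0 ?normr_ge0.
have /H2 /implyP /(_ isT) := mem_index_enum j.
by rewrite sqrf_eq0 normr_eq0 => /eqP.
Qed.

Lemma vtv (R : rcfType) k (v : 'cV[R[i]]_k) : ctrmx v *m v = ((F v)%:C%C)%:M.
Proof.
rewrite [LHS]mx11_scalar; congr (_%:M).
by rewrite FtrE mxtrace_mulC /mxtrace big_ord1.
Qed.

Lemma FC_ge0 (R : rcfType) m n (A : 'M[R[i]]_(m, n)) : 0 <= (F A)%:C%C.
Proof. by rewrite lecR F_ge0. Qed.

Lemma ctrmx0 (R : rcfType) m n : ctrmx (0 : 'M[R[i]]_(m, n)) = 0.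
Proof. by apply/matrixP => i j; rewrite !mxE rmorph0. Qed.

Lemma CS (R : rcfType) k (u v : 'cV[R[i]]_k) :
  `|(ctrmx u *m v) 0 0| ^+ 2 <= (F u)%:C%C * (F v)%:C%C.
Proof.
have [v0|] := eqVneq (F v) 0.
  by rewrite (F_eq0 v0) mulmx0 mxE normr0 expr0n /= mulr_ge0 ?FC_ge0.
move=> nz.
have fv0 : 0 < (F v)%:C%C by rewrite ltcR lt_def nz F_ge0.
set fv := (F v)%:C%C in fv0 *.
set d := (ctrmx v *m u) 0 0.
have -> : `|(ctrmx u *m v) 0 0| = `|d|.
  rewrite /d -[u in RHS]ctrmxK -ctrmxM; set M := ctrmx u *m v; by rewrite [in RHS]mxE norm_conjC.
pose a := d / fv; pose w := u - a *: v.
have vw : ctrmx v *m w = 0.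
  rewrite mulmxBr -scalemxAr vtv [ctrmx v *m u]mx11_scalar -/d -/fv scale_scalar_mx.
  by rewrite /a divfK ?subrr // gt_eqF.
have wv : ctrmx w *m (a *: v) = 0.
  by rewrite -scalemxAr -[v]ctrmxK -ctrmxM vw ctrmx0 scaler0.
have uE : u = w + a *: v by rewrite /w subrK.
have Fu : (F u)%:C%C = (F w)%:C%C + `|a| ^+ 2 * fv.
  rewrite {1}uE (pyth' wv) rmorphD; congr (_ + _); exact: FZ.
have ha : `|d| ^+ 2 = `|a| ^+ 2 * fv * fv.
  rewrite /a normrM normfV (gtr0_norm fv0) exprMn -!mulrA -expr2.
  by rewrite [fv ^+ 2]expr2 mulKf ?gt_eqF // mulVf ?gt_eqF // mulr1 expr2.
rewrite ha; apply: ler_wpM2r; first exact: ltW.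
by rewrite Fu -subr_ge0 addrK FC_ge0.
Qed.

Lemma lesq (R : realDomainType) (a b : R) : 0 <= a -> 0 <= b -> (a ^+ 2 <= b ^+ 2) = (a <= b).
Proof. by move=> ha hb; apply: ler_sqr; rewrite nnegrE. Qed.

Lemma frob_ge0 (R : rcfType) m n (A : 'M[R[i]]_(m, n)) : 0 <= frob A.
Proof. exact: sqrtr_ge0. Qed.

Lemma F1 (R : rcfType) (M : 'M[R[i]]_1) : (F M)%:C%C = `|M 0 0| ^+ 2.
Proof. by rewrite FE !big_ord1. Qed.

Lemma FC_le (R : rcfType) (a b : R) : (a%:C%C <= b%:C%C) = (a <= b).
Proof. exact: lecR. Qed.

Lemma FMv_le (R : rcfType) m n (X : 'M[R[i]]_(m, n)) (x : 'cV[R[i]]_n) :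
  F (X *m x) <= F X * F x.
Proof.
rewrite F_row (F_row X) mulr_suml; apply: ler_sum => i _.
have h := CS (ctrmx (row i X)) x.
rewrite ctrmxK F_adj -row_mul -F1 in h.
by rewrite -FC_le [X in _ <= X]rmorphM.
Qed.

Lemma F0 (R : rcfType) m n : F (0 : 'M[R[i]]_(m, n)) = 0.
Proof.
apply: complexI; rewrite FE; rewrite big1 // => i _; rewrite big1 // => j _.
by rewrite mxE normr0 expr0n.
Qed.

Lemma frob0 (R : rcfType) m n : frob (0 : 'M[R[i]]_(m, n)) = 0.
Proof. by apply/eqP; rewrite -sqrf_eq0; have := F0 R m n; rewrite /F => ->. Qed.

Lemma F_frob_le (R : rcfType) m n p q (A : 'M[R[i]]_(m, n)) (B : 'M[R[i]]_(p, q)) :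
  (F A <= F B) = (frob A <= frob B).
Proof. by rewrite /F lesq ?frob_ge0. Qed.

Lemma spec_ub (R : realType) m n (X : 'M[R[i]]_(m, n)) :
  has_ubound [set frob (X *m x) | x in [set x : 'cV[R[i]]_n | frob x <= 1]]%classic.
Proof.
exists (frob X) => _ [x /= hx <-].
rewrite -F_frob_le; apply: le_trans (FMv_le X x) _.
rewrite ler_piMr ?F_ge0 // /F exprn_ile1 ?frob_ge0 //.
Qed.

Lemma spec_in (R : realType) m n (X : 'M[R[i]]_(m, n)) (x : 'cV[R[i]]_n) :
  frob x <= 1 -> frob (X *m x) <= spec X.
Proof. by move=> hx; apply: ub_le_sup (spec_ub X) _ _; exists x. Qed.

Lemma spec_ge0 (R : realType) m n (X : 'M[R[i]]_(m, n)) : 0 <= spec X.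
Proof.
have h := @spec_in R m n X 0; rewrite mulmx0 frob0 in h.
exact: le_trans (frob_ge0 _) (h ler01).
Qed.

Lemma spec_vec (R : realType) m n (X : 'M[R[i]]_(m, n)) (y : 'cV[R[i]]_n) :
  frob (X *m y) <= spec X * frob y.
Proof.
have [y0|nz] := eqVneq (F y) 0.
  by rewrite (F_eq0 y0) mulmx0 !(frob0 R) mulr0.
set t := frob y.
have t0 : 0 < t by rewrite lt_def frob_ge0 andbT; apply: contra nz => /eqP h; rewrite /F -/t h expr0n.
pose y' := ((t^-1)%:C)%C *: y.
have hy' : frob y' <= 1.
  rewrite -(lesq (frob_ge0 _) ler01) expr1n -/(F y') (@FZr R) /F -/t exprVn mulVf //.
have h := spec_in X hy'.
rewrite /y' -scalemxAr in h.
rewrite -(lesq (frob_ge0 _) (mulr_ge0 (spec_ge0 X) (ltW t0))) exprMn.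
rewrite -(lesq (frob_ge0 _) (spec_ge0 X)) -/(F _) (@FZr R) exprVn in h.
rewrite -/(F _) -(ler_pM2l (_ : 0 < t ^-2)) ?invr_gt0 ?exprn_gt0 //.
by rewrite [X in _ <= X]mulrCA mulVf ?mulr1 // expf_neq0 // gt_eqF.
Qed.

Lemma col_mulmx (T : pzRingType) m n p (j : 'I_p) (X : 'M[T]_(m, n)) (Y : 'M[T]_(n, p)) :
  col j (X *m Y) = X *m col j Y.
Proof. by apply/matrixP => i k; rewrite !mxE; apply: eq_bigr => l _; rewrite !mxE. Qed.

Lemma FmulL (R : realType) m n p (X : 'M[R[i]]_(m, n)) (Y : 'M[R[i]]_(n, p)) :
  F (X *m Y) <= spec X ^+ 2 * F Y.
Proof.
rewrite (F_col (X *m Y)) (F_col Y) mulr_sumr; apply: ler_sum => j _.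
rewrite col_mulmx /F -exprMn lesq ?frob_ge0 ?mulr_ge0 ?spec_ge0 ?frob_ge0 //.
exact: spec_vec.
Qed.

Lemma spec_adj (R : realType) m n (X : 'M[R[i]]_(m, n)) : spec (ctrmx X) <= spec X.
Proof.
apply: ge_sup.
  exists (frob (ctrmx X *m (0 : 'cV[R[i]]_m))); exists 0 => //; by rewrite /= (frob0 R) ler01.
move=> _ [x /= hx <-]; set y := ctrmx X *m x.
have e : (F y)%:C%C = (ctrmx x *m (X *m y)) 0 0.
  have e0 : ctrmx y *m y = ctrmx x *m (X *m y).
    by rewrite /y (@ctrmxM R) (@ctrmxK R) !mulmxA.
  move: e0.
  by rewrite vtv => <-; rewrite mxE eqxx mulr1n.
have cs := CS x (X *m y); rewrite -e ger0_norm ?FC_ge0 in cs.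
have cs' : F y ^+ 2 <= F x * F (X *m y).
  by rewrite -FC_le [X in _ <= X]rmorphM [X in X <= _]rmorphXn.
have Fx : F x <= 1 by rewrite /F exprn_ile1 ?frob_ge0.
have h1 : F y ^+ 2 <= spec X ^+ 2 * F y.
  apply: (le_trans cs'); apply: le_trans (FmulL X y).
  by rewrite ler_piMl ?F_ge0.
have [y0|nz] := eqVneq (F y) 0.
  by rewrite (F_eq0 y0) (frob0 R) spec_ge0.
have Fy0 : 0 < F y by rewrite lt_def nz F_ge0.
rewrite -(lesq (frob_ge0 _) (spec_ge0 _)) -/(F y).
all: by [rewrite -(ler_pM2r Fy0) -expr2 | ].
Qed.

Lemma FmulR (R : realType) m n p (Y : 'M[R[i]]_(m, n)) (X : 'M[R[i]]_(n, p)) :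
  F (Y *m X) <= F Y * spec X ^+ 2.
Proof.
rewrite -F_adj ctrmxM mulrC -(F_adj Y); apply: le_trans (FmulL _ _) _.
rewrite ler_wpM2r ?F_ge0 // lesq ?spec_ge0 //; exact: spec_adj.
Qed.

Lemma zmod_id (V : zmodType) (bp ap x y : V) :
  bp - ap = - (x - y) + (bp - y) - (ap - x).
Proof.
by rewrite [- (x - y) + _]addrC opprB addrA subrK opprB addrA subrK.
Qed.

Lemma divle (R : realFieldType) (a x y : R) : 0 <= a -> 0 <= y -> x <= y * a -> x / a <= y.
Proof.
move=> a0 y0 h; have [->|nz] := eqVneq a 0; first by rewrite invr0 mulr0.
by rewrite ler_pdivrMr // lt_def nz a0.
Qed.

Lemma main1 (R : realType) m n (A B : 'M[R[i]]_(m, n)) (Ap Bp : 'M[R[i]]_(n, m)) :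
  is_pinv A Ap -> is_pinv B Bp ->
  (F (Ap *m (B - A)) - spec B ^+ 2 * F (Ap *m (B - A) *m Bp)) / spec A ^+ 2
  + (F ((B - A) *m Bp) - spec A ^+ 2 * F (Ap *m (B - A) *m Bp)) / spec B ^+ 2
  + F (Bp *m (B - A) *m Ap) <= F (Bp - Ap).
Proof.
case=> A1 A2 A3 A4 [] B1 B2 B3 B4.
set E := B - A.
pose PA := (1%:M - A *m Ap); pose QB := (1%:M - Bp *m B).
pose T1 := Bp *m E *m Ap; pose T2 := Bp *m PA; pose T3 := QB *m Ap.
have dec : Bp - Ap = - T1 + T2 - T3.
  rewrite /T1 /T2 /T3 /E /PA /QB !mulmxBr !mulmxBl !mulmx1 !mul1mx !mulmxA.
  exact: zmod_id.
have Edef : E = B - A by [].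
have PAdef : PA = 1%:M - A *m Ap by [].
have QBdef : QB = 1%:M - Bp *m B by [].
have T1def : T1 = Bp *m E *m Ap by [].
have T2def : T2 = Bp *m PA by [].
have T3def : T3 = QB *m Ap by [].
clearbody T1 T2 T3 PA QB E.
have cPA : ctrmx PA = PA by rewrite PAdef ctrmxB ctrmx1 A3.
have cQB : ctrmx QB = QB by rewrite QBdef ctrmxB ctrmx1 B4.
have K2 : Ap *m PA = 0 by rewrite PAdef mulmxBr mulmx1 mulmxA A2 subrr.
have K1 : ctrmx Bp *m QB = 0.
  by rewrite QBdef mulmxBr mulmx1 -B4 -ctrmxM B2 subrr.
have K3 : Bp *m B *m QB = 0.
  by rewrite QBdef mulmxBr mulmx1 mulmxA B2 subrr.
have K4 : A *m Ap *m PA = 0.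
  by rewrite PAdef mulmxBr mulmx1 mulmxA A1 subrr.
have K5 : B *m QB = 0 by rewrite QBdef mulmxBr mulmx1 mulmxA B1 subrr.
have K6 : PA *m A = 0 by rewrite PAdef mulmxBl mul1mx A1 subrr.
have hT3 : ctrmx Bp *m T3 = 0 by rewrite T3def mulmxA K1 mul0mx.
have o1 : ctrmx T1 *m T3 = 0 by rewrite T1def !ctrmxM -!mulmxA hT3 !mulmx0.
have o2 : ctrmx T2 *m T3 = 0 by rewrite T2def ctrmxM -mulmxA hT3 mulmx0.
have o3 : T1 *m ctrmx T2 = 0.
  by rewrite T1def T2def ctrmxM cPA -!mulmxA (mulmxA Ap) K2 mul0mx !mulmx0.
have FT : F (Bp - Ap) = F T1 + F T2 + F T3.
  rewrite dec pyth' ?FN; last first.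
    by rewrite ctrmxD ctrmxN mulmxN mulmxDl mulNmx o1 o2 oppr0 add0r oppr0.
  by rewrite pyth ?FN // mulNmx o3 oppr0.
have h3 : F (Ap *m E) <= F (Ap *m E *m Bp) * spec B ^+ 2 + F T3 * spec A ^+ 2.
  have eAE : Ap *m E = Ap *m E *m Bp *m B + Ap *m E *m QB.
    by rewrite QBdef mulmxBr mulmx1 mulmxA addrCA subrr addr0.
  have o4 : (Ap *m E *m Bp *m B) *m ctrmx (Ap *m E *m QB) = 0.
    by rewrite ctrmxM cQB -(mulmxA _ Bp B) -(mulmxA _ (Bp *m B)) (mulmxA (Bp *m B)) K3 mul0mx mulmx0.
  have e2 : Ap *m E *m QB = - ctrmx (T3 *m A).
    rewrite T3def -(mulmxA QB Ap A) ctrmxM A4 cQB Edef mulmxBr mulmxBl -(mulmxA Ap B) K5 mulmx0 sub0r.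
    by [].
  have := pyth o4; rewrite -eAE => ->; rewrite e2 FN F_adj; apply: lerD; first exact: FmulR.
  exact: FmulR.
have h2 : F (E *m Bp) <= spec A ^+ 2 * F (Ap *m E *m Bp) + spec B ^+ 2 * F T2.
  have eEB : E *m Bp = A *m (Ap *m E *m Bp) + PA *m E *m Bp.
    by rewrite PAdef !mulmxBl !mul1mx !mulmxA addrCA subrr addr0.
  have o5 : ctrmx (A *m (Ap *m E *m Bp)) *m (PA *m E *m Bp) = 0.
    rewrite -!mulmxA mulmxA ctrmxM A3 -!mulmxA.
    by rewrite (mulmxA A) (mulmxA (A *m Ap)) K4 mul0mx mulmx0.
  have e3 : PA *m E *m Bp = ctrmx (B *m T2).
    rewrite T2def mulmxA ctrmxM cPA B3 Edef mulmxBr mulmxBl K6 mul0mx subr0.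
    by rewrite mulmxA.
  have := pyth' o5; rewrite -eEB => ->; rewrite e3 F_adj.
  by apply: lerD; exact: FmulL.
rewrite FT -T1def (addrC _ (F T1)) -!addrA lerD2l addrC.
apply: lerD; apply: divle; rewrite ?F_ge0 ?exprn_ge0 ?spec_ge0 // lerBlDl.
  by rewrite mulrC.
by rewrite [F T2 * _]mulrC.
Qed.
Theorem corollary3p8 (R : realType) (m n r s : nat)
  (A B : 'M[R[i]]_(m, n)) (Ap Bp : 'M[R[i]]_(n, m)) :
  \rank A = r -> \rank B = s ->
  is_pinv A Ap -> is_pinv B Bp ->
  let E := B - A in
  let gamma1 :=
    (frob (Ap *m E) ^+ 2 - spec B ^+ 2 * frob (Ap *m E *m Bp) ^+ 2) / spec A ^+ 2
    + (frob (E *m Bp) ^+ 2 - spec A ^+ 2 * frob (Ap *m E *m Bp) ^+ 2) / spec B ^+ 2 in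
  let gamma2 :=
    (frob (E *m Ap) ^+ 2 - spec B ^+ 2 * frob (Bp *m E *m Ap) ^+ 2) / spec A ^+ 2
    + (frob (Bp *m E) ^+ 2 - spec A ^+ 2 * frob (Bp *m E *m Ap) ^+ 2) / spec B ^+ 2 in
  frob (Bp - Ap) ^+ 2 >= Num.max (gamma1 + frob (Bp *m E *m Ap) ^+ 2)
                                 (gamma2 + frob (Ap *m E *m Bp) ^+ 2).
Proof.
move=> _ _ hA hB; cbv zeta.
rewrite ge_max; apply/andP; split.
  exact: (main1 hA hB).
have h := main1 hB hA.
have e1 : A - B = - (B - A) by rewrite opprB.
have e2 : Ap - Bp = - (Bp - Ap) by rewrite opprB.
rewrite e1 e2 !mulmxN !mulNmx in h.
rewrite !FN in h.
move: h; rewrite /F.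
by rewrite (addrC ((frob (Bp *m (B - A)) ^+ 2 - _) / _)).
Qed.
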